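(* Let $x_0\in\mathbb{R}$, $r>0$, and let $F:(x_0-r,x_0+r)\to\mathbb{R}$ be of class $C^3$ with $F(x_0)=x_0$, $F'(x_0)=1$, $F''(x_0)<0$. Then there exists $r_1>0$ such that for every $x_1\in(x_0,x_0+r_1)$ the sequence defined by $x_{n+1}=F(x_n)$ satisfies $|x_n-x_0|\simeq n^{-1}$ as $n\to\infty$, the set $S(x_1)=\{x_n:n\ge1\}$ satisfies $\dim_BS(x_1)=\frac12$, and $S(x_1)$ is Minkowski nondegenerate. Analogously, if instead $F''(x_0)>0$, the same conclusions hold for every $x_1\in(x_0-r_1,x_0)$.
   Context: For sequences of positive reals, $a_n\simeq b_n$ as $n\to\infty$ means there exist constants $0<A\le B$ with $A\le a_n/b_n\le B$ for all $n$. For a bounded set $S\subset\mathbb{R}$ and $\varepsilon>0$, $S_\varepsilon=\{y: \mathrm{dist}(y,S)<\varepsilon\}$ and $|S_\varepsilon|$ is its Lebesgue measure. $\mathcal M^{*s}(S)=\limsup_{\varepsilon\to0}|S_\varepsilon|/\varepsilon^{1-s}$, $\mathcal M_*^{s}(S)=\liminf_{\varepsilon\to0}|S_\varepsilon|/\varepsilon^{1-s}$; $\overline{\dim}_BS=\inf\{s\ge0:\mathcal M^{*s}(S)=0\}$, $\underline{\dim}_BS=\inf\{s\ge0:\mathcal M_*^{s}(S)=0\}$, and $\dim_BS$ is their common value when equal. $S$ is Minkowski nondegenerate if there is $d\ge0$ with $0<\mathcal M_*^d(S)\le\mathcal M^{*d}(S)<\infty$. *)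

(* Defs.v *)
From Stdlib Require Import Reals Lra.
Open Scope R_scope.

Definition asymp_equiv (a b : nat -> R) : Prop :=
  exists A B : R, 0 < A /\ A <= B /\
    forall n : nat, (1 <= n)%nat -> A <= a n / b n <= B.

Definition is_glb (E : R -> Prop) (m : R) : Prop :=
  (forall x, E x -> m <= x) /\ (forall b, (forall x, E x -> b <= x) -> b <= m).

(* Lebesgue (outer) measure: infimum of total lengths of countable covers
   by open intervals (a n, b n) with convergent length series. *)
Definition cover_length (A : R -> Prop) (l : R) : Prop :=
  exists a b : nat -> R,
    (forall n, a n <= b n) /\
    (forall x, A x -> exists n, a n < x < b n) /\
    infinite_sum (fun n => b n - a n) l.

Definition lebesgue_measure (A : R -> Prop) (m : R) : Prop :=
  is_glb (cover_length A) m.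

Definition nbhd (S : R -> Prop) (eps : R) (y : R) : Prop :=
  exists x, S x /\ Rabs (y - x) < eps.

Definition mink_ratio (S : R -> Prop) (s eps q : R) : Prop :=
  exists m, lebesgue_measure (nbhd S eps) m /\ q = m / Rpower eps (1 - s).

(* M^{*s}(S) = 0, i.e. limsup_{eps->0} ratio = 0 (ratio is nonnegative). *)
Definition upper_content_zero (S : R -> Prop) (s : R) : Prop :=
  forall delta, 0 < delta -> exists eta, 0 < eta /\
    forall eps q, 0 < eps < eta -> mink_ratio S s eps q -> q < delta.

(* M_*^s(S) = 0, i.e. liminf_{eps->0} ratio = 0 (ratio is nonnegative). *)
Definition lower_content_zero (S : R -> Prop) (s : R) : Prop :=
  forall delta eta, 0 < delta -> 0 < eta ->
    exists eps q, 0 < eps < eta /\ mink_ratio S s eps q /\ q < delta.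

Definition lower_content_pos (S : R -> Prop) (s : R) : Prop :=
  exists c eta, 0 < c /\ 0 < eta /\
    forall eps q, 0 < eps < eta -> mink_ratio S s eps q -> c <= q.

Definition upper_content_finite (S : R -> Prop) (s : R) : Prop :=
  exists C eta, 0 < eta /\
    forall eps q, 0 < eps < eta -> mink_ratio S s eps q -> q <= C.

Definition upper_box_dim (S : R -> Prop) (d : R) : Prop :=
  is_glb (fun s => 0 <= s /\ upper_content_zero S s) d.

Definition lower_box_dim (S : R -> Prop) (d : R) : Prop :=
  is_glb (fun s => 0 <= s /\ lower_content_zero S s) d.

Definition box_dim (S : R -> Prop) (d : R) : Prop :=
  upper_box_dim S d /\ lower_box_dim S d.

(* 0 < M_*^d(S) <= M^{*d}(S) < infinity for some d >= 0
   (the middle inequality liminf <= limsup always holds). *)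
Definition minkowski_nondegenerate (S : R -> Prop) : Prop :=
  exists d, 0 <= d /\ lower_content_pos S d /\ upper_content_finite S d.

Definition orbit_set (x : nat -> R) : R -> Prop :=
  fun y => exists n, (1 <= n)%nat /\ y = x n.

Definition orbit_conclusions (x0 : R) (x : nat -> R) : Prop :=
  asymp_equiv (fun n => Rabs (x n - x0)) (fun n => / INR n) /\
  box_dim (orbit_set x) (1/2) /\
  minkowski_nondegenerate (orbit_set x).

(* Main.v *)
Require Import Defs.
From Stdlib Require Import Reals Lra Lia List ZArith Classical.
Open Scope R_scope.

Lemma isum_partial_le (f : nat -> R) (l : R) :
  (forall n, 0 <= f n) -> infinite_sum f l -> forall n, sum_f_R0 f n <= l.
Proof.
  intros Hf Hs n. apply growing_ineq.
  - intro k. simpl. specialize (Hf (S k)). lra.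
  - intros e He. destruct (Hs e He) as [N HN]. exists N. intros k Hk.
    specialize (HN k Hk). unfold Rdist in HN. exact HN.
Qed.

Lemma isum_nonneg (f : nat -> R) (l : R) :
  (forall n, 0 <= f n) -> infinite_sum f l -> 0 <= l.
Proof.
  intros Hf Hs. pose proof (isum_partial_le f l Hf Hs 0). simpl in H.
  specialize (Hf 0%nat). lra.
Qed.

Fixpoint sumL (a b : nat -> R) (L : list nat) : R :=
  match L with nil => 0 | n :: L' => (b n - a n) + sumL a b L' end.

Lemma sumL_app a b l1 l2 : sumL a b (l1 ++ l2) = sumL a b l1 + sumL a b l2.
Proof. induction l1; simpl; lra. Qed.

Lemma sumL_nonneg a b L : (forall n, a n <= b n) -> 0 <= sumL a b L.
Proof. intros H; induction L; simpl; [lra|]. specialize (H a0). lra. Qed.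

Lemma finite_cover_len (a b : nat -> R) : (forall n, a n <= b n) ->
  forall k (L : list nat), (length L <= k)%nat -> forall u v,
  (forall x, u <= x <= v -> exists n, In n L /\ a n < x < b n) ->
  v - u <= sumL a b L.
Proof.
  intros Hab k. induction k as [|k IH]; intros L HL u v Hc.
  - destruct L; [|simpl in HL; lia].
    destruct (Rle_dec u v) as [Huv|Huv].
    + destruct (Hc u) as [n [Hn _]]; [lra|]. destruct Hn.
    + simpl. lra.
  - destruct (Rle_dec u v) as [Huv|Huv].
    2:{ pose proof (sumL_nonneg a b L Hab). lra. }
    destruct (Hc v) as [j [Hj Hjx]]; [lra|].
    destruct (in_split j L Hj) as [l1 [l2 E]]. subst L.
    rewrite sumL_app. simpl.
    assert (Hs : sumL a b (l1 ++ l2) = sumL a b l1 + sumL a b l2) by apply sumL_app.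
    destruct (Rlt_le_dec (a j) u) as [Hau|Hau].
    + pose proof (sumL_nonneg a b l1 Hab). pose proof (sumL_nonneg a b l2 Hab). lra.
    + assert (H1 : a j - u <= sumL a b (l1 ++ l2)).
      { apply IH.
        - rewrite length_app in *. simpl in HL. lia.
        - intros x Hx. destruct (Hc x) as [n [Hn Hnx]]; [lra|].
          exists n. split; [|exact Hnx].
          apply in_app_or in Hn. destruct Hn as [Hn|Hn]; apply in_or_app; [now left|].
          destruct Hn as [Hn|Hn]; [subst n; lra|now right]. }
      lra.
Qed.

Lemma sumL_seq a b K : sumL a b (seq 0 (S K)) = sum_f_R0 (fun n => b n - a n) K.
Proof.
  induction K.
  - simpl. lra.
  - rewrite seq_S, sumL_app, IHK. simpl. lra.
Qed.

Lemma finite_subcover (a b : nat -> R) (u v : R) : u <= v ->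
  (forall x, u <= x <= v -> exists n, a n < x < b n) ->
  exists K, forall x, u <= x <= v -> exists n, (n < K)%nat /\ a n < x < b n.
Proof.
  intros Huv Hc.
  set (E := fun t => u <= t <= v /\ exists K, forall x, u <= x <= t ->
            exists n, (n < K)%nat /\ a n < x < b n).
  assert (Eu : E u).
  { split; [lra|]. destruct (Hc u) as [n0 Hn0]; [lra|]. exists (S n0).
    intros x Hx. exists n0. split; [lia|]. replace x with u by lra. exact Hn0. }
  assert (Hb : bound E). { exists v. intros t [Ht _]. lra. }
  destruct (completeness E Hb (ex_intro _ u Eu)) as [s [Hs1 Hs2]].
  assert (Hus : u <= s) by (apply Hs1; exact Eu).
  assert (Hsv : s <= v) by (apply Hs2; intros t [Ht _]; lra).
  destruct (Hc s) as [j Hj]; [lra|].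
  assert (Ht : exists t, E t /\ a j < t).
  { apply Classical_Prop.NNPP. intro Hn.
    assert (s <= a j). { apply Hs2. intros t Et. destruct (Rle_dec t (a j)); [auto|].
      exfalso. apply Hn. exists t. split; [auto|lra]. }
    lra. }
  destruct Ht as [t [[Ht1 [K HK]] Hat]].
  set (w := Rmin v ((s + b j)/2)).
  assert (Ew : E w).
  { split. { unfold w. split; [apply Rmin_case; lra|apply Rmin_l]. }
    exists (Nat.max K (S j)). intros x Hx.
    destruct (Rle_dec x t) as [Hxt|Hxt].
    - destruct (HK x) as [n [Hn1 Hn2]]; [lra|]. exists n. split; [lia|auto].
    - exists j. split; [lia|]. split; [lra|].
      assert (w <= (s + b j)/2) by apply Rmin_r. lra. }
  assert (Hws : w <= s) by (apply Hs1; exact Ew).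
  unfold w in *. destruct (Rle_dec v ((s + b j)/2)) as [Hv|Hv].
  - rewrite Rmin_left in Ew by lra. destruct Ew as [_ [K' HK']]. exists K'. exact HK'.
  - rewrite Rmin_right in Hws by lra. lra.
Qed.

Lemma cover_interval (A : R -> Prop) (p q l : R) : p < q ->
  (forall y, p < y < q -> A y) -> cover_length A l -> q - p <= l.
Proof.
  intros Hpq HA [a [b [Hab [Hcov Hsum]]]].
  assert (Hf : forall n, 0 <= b n - a n) by (intro n; specialize (Hab n); lra).
  assert (Hd : forall d, 0 < d -> 2 * d < q - p -> q - p - 2 * d <= l).
  { intros d Hd1 Hd2.
    destruct (finite_subcover a b (p + d) (q - d)) as [K HK]; [lra| |].
    { intros x Hx. apply Hcov, HA. lra. }
    assert (H1 : (q - d) - (p + d) <= sumL a b (seq 0 (S K))).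
    { apply (finite_cover_len a b Hab (length (seq 0 (S K)))); [lia|].
      intros x Hx. destruct (HK x Hx) as [n [Hn1 Hn2]]. exists n. split; [|auto].
      apply in_seq. lia. }
    rewrite sumL_seq in H1. pose proof (isum_partial_le _ _ Hf Hsum K). lra. }
  destruct (Rle_dec (q - p) l) as [H|H]; [auto|]. exfalso.
  set (d := Rmin ((q - p - l)/4) ((q-p)/4)).
  assert (d <= (q-p-l)/4) by apply Rmin_l. assert (d <= (q-p)/4) by apply Rmin_r.
  assert (0 < d) by (unfold d; apply Rmin_case; lra).
  specialize (Hd d). lra.
Qed.

Lemma measure_lower (A : R -> Prop) (p q m : R) : p < q ->
  (forall y, p < y < q -> A y) -> lebesgue_measure A m -> q - p <= m.
Proof.
  intros Hpq HA [_ H2]. apply H2. intros l Hl. eapply cover_interval; eauto.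
Qed.

Lemma measure_upper (A : R -> Prop) (l m : R) :
  cover_length A l -> lebesgue_measure A m -> m <= l.
Proof. intros Hl [H1 _]. apply H1, Hl. Qed.

Lemma measure_exists (A : R -> Prop) :
  (exists l, cover_length A l) -> exists m, lebesgue_measure A m.
Proof.
  intros [l0 Hl0].
  set (E := fun z => exists l, cover_length A l /\ z = - l).
  assert (Hb : bound E).
  { exists 0. intros z [l [[a [b [Hab [_ Hs]]]] Hz]]. subst z.
    assert (0 <= l); [|lra]. eapply isum_nonneg; [|exact Hs]. intro n. specialize (Hab n). lra. }
  destruct (completeness E Hb (ex_intro _ (-l0) (ex_intro _ l0 (conj Hl0 eq_refl)))) as [s [Hs1 Hs2]].
  exists (-s). split.
  - intros x Hx. assert (-x <= s); [apply Hs1; exists x; split; auto|lra].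
  - intros c Hc. assert (s <= -c); [|lra]. apply Hs2. intros z [l [Hl Hz]].
    subst z. specialize (Hc l Hl). lra.
Qed.

Lemma Rpower_pos' x y : 0 < Rpower x y.
Proof. unfold Rpower. apply exp_pos. Qed.

Lemma Rpower_small (a d : R) : 0 < a -> 0 < d ->
  exists eta, 0 < eta /\ forall e, 0 < e < eta -> Rpower e a < d.
Proof.
  intros Ha Hd. exists (Rpower d (/ a)). split; [apply Rpower_pos'|].
  intros e He. apply Rlt_le_trans with (Rpower (Rpower d (/a)) a).
  - apply Rlt_Rpower_l; lra.
  - rewrite Rpower_mult. replace (/ a * a) with 1 by (field; lra).
    rewrite Rpower_1 by lra. lra.
Qed.

Lemma Rpower_ge1 (e a : R) : 0 < e <= 1 -> a <= 0 -> 1 <= Rpower e a.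
Proof.
  intros He Ha. replace a with (- (- a)) by ring. rewrite Rpower_Ropp.
  assert (H : Rpower e (- a) <= Rpower 1 (- a)) by (apply Rle_Rpower_l; lra).
  unfold Rpower at 2 in H. rewrite ln_1, Rmult_0_r, exp_0 in H.
  pose proof (Rpower_pos' e (-a)).
  rewrite <- Rinv_1. apply Rinv_le_contravar; lra.
Qed.

Section Mink.
Variable S : R -> Prop.
Variables c1 C1 eta0 : R.
Hypothesis Hc1 : 0 < c1.
Hypothesis HC1 : 0 < C1.
Hypothesis Heta0 : 0 < eta0.
Hypothesis Hex : forall eps, 0 < eps < eta0 -> exists m, lebesgue_measure (nbhd S eps) m.
Hypothesis Hbd : forall eps m, 0 < eps < eta0 -> lebesgue_measure (nbhd S eps) m ->
  c1 * sqrt eps <= m <= C1 * sqrt eps.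

Lemma ratio_bounds s eps q : 0 < eps < eta0 -> mink_ratio S s eps q ->
  c1 * Rpower eps (s - 1/2) <= q <= C1 * Rpower eps (s - 1/2).
Proof.
  intros He [m [Hm Hq]]. subst q. specialize (Hbd eps m He Hm).
  assert (HP : 0 < Rpower eps (1 - s)) by apply Rpower_pos'.
  assert (Hsq : sqrt eps = Rpower eps (s - 1/2) * Rpower eps (1 - s)).
  { rewrite <- Rpower_plus, <- Rpower_sqrt by lra. f_equal. field. }
  rewrite Hsq in Hbd.
  split.
  - apply Rmult_le_reg_r with (Rpower eps (1 - s)); [lra|].
    replace (m / Rpower eps (1 - s) * Rpower eps (1 - s)) with m by (field; lra). lra.
  - apply Rmult_le_reg_r with (Rpower eps (1 - s)); [lra|].
    replace (m / Rpower eps (1 - s) * Rpower eps (1 - s)) with m by (field; lra). lra.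
Qed.

Lemma ratio_exists s eps : 0 < eps < eta0 -> exists q, mink_ratio S s eps q.
Proof.
  intros He. destruct (Hex eps He) as [m Hm]. exists (m / Rpower eps (1 - s)).
  exists m. auto.
Qed.

Lemma up_zero s : 1/2 < s -> upper_content_zero S s.
Proof.
  intros Hs d Hd. destruct (Rpower_small (s - 1/2) (d / C1)) as [eta [Heta H]];
    [lra| apply Rdiv_lt_0_compat; lra|].
  exists (Rmin eta eta0). split; [apply Rmin_case; lra|].
  intros eps q He Hq.
  assert (eps < eta) by (pose proof (Rmin_l eta eta0); lra).
  assert (eps < eta0) by (pose proof (Rmin_r eta eta0); lra).
  destruct (ratio_bounds s eps q ltac:(lra) Hq) as [_ H2].
  specialize (H eps ltac:(lra)).
  apply Rle_lt_trans with (C1 * Rpower eps (s - 1/2)); [lra|].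
  apply Rmult_lt_reg_l with (/ C1). { apply Rinv_0_lt_compat; lra. }
  rewrite <- Rmult_assoc, Rinv_l by lra. unfold Rdiv in H. lra.
Qed.

Lemma low_zero s : 1/2 < s -> lower_content_zero S s.
Proof.
  intros Hs d eta Hd Heta.
  destruct (up_zero s Hs d Hd) as [eta1 [Heta1 H]].
  set (e := Rmin eta (Rmin eta1 eta0) / 2).
  assert (He : 0 < e).
  { unfold e. assert (0 < Rmin eta (Rmin eta1 eta0)); [|lra].
    repeat apply Rmin_glb_lt; lra. }
  assert (e < eta /\ e < eta1 /\ e < eta0).
  { pose proof (Rmin_l eta (Rmin eta1 eta0)). pose proof (Rmin_r eta (Rmin eta1 eta0)).
    pose proof (Rmin_l eta1 eta0). pose proof (Rmin_r eta1 eta0). unfold e. lra. }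
  destruct (ratio_exists s e ltac:(lra)) as [q Hq].
  exists e, q. split; [lra|]. split; [auto|]. apply (H e q); [lra|auto].
Qed.

Lemma not_up_zero s : s < 1/2 -> ~ upper_content_zero S s.
Proof.
  intros Hs Hu. destruct (Hu c1 Hc1) as [eta [Heta H]].
  set (e := Rmin eta (Rmin 1 eta0) / 2).
  assert (He : 0 < e).
  { unfold e. assert (0 < Rmin eta (Rmin 1 eta0)); [|lra].
    repeat apply Rmin_glb_lt; lra. }
  assert (e < eta /\ e < 1 /\ e < eta0).
  { pose proof (Rmin_l eta (Rmin 1 eta0)). pose proof (Rmin_r eta (Rmin 1 eta0)).
    pose proof (Rmin_l 1 eta0). pose proof (Rmin_r 1 eta0). unfold e. lra. }
  destruct (ratio_exists s e ltac:(lra)) as [q Hq].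
  specialize (H e q ltac:(lra) Hq).
  destruct (ratio_bounds s e q ltac:(lra) Hq) as [H1 _].
  pose proof (Rpower_ge1 e (s - 1/2) ltac:(lra) ltac:(lra)).
  assert (c1 <= c1 * Rpower e (s - 1/2)).
  { rewrite <- (Rmult_1_r c1) at 1. apply Rmult_le_compat_l; lra. }
  lra.
Qed.

Lemma not_low_zero s : s < 1/2 -> ~ lower_content_zero S s.
Proof.
  intros Hs Hl. destruct (Hl c1 (Rmin 1 eta0) Hc1 ltac:(apply Rmin_case; lra))
    as [e [q [He [Hq Hlt]]]].
  pose proof (Rmin_l 1 eta0). pose proof (Rmin_r 1 eta0).
  destruct (ratio_bounds s e q ltac:(lra) Hq) as [H1 _].
  pose proof (Rpower_ge1 e (s - 1/2) ltac:(lra) ltac:(lra)).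
  assert (c1 <= c1 * Rpower e (s - 1/2)).
  { rewrite <- (Rmult_1_r c1) at 1. apply Rmult_le_compat_l; lra. }
  lra.
Qed.

Lemma mink_abstract : box_dim S (1/2) /\ minkowski_nondegenerate S.
Proof.
  split; [split|].
  - split.
    + intros x [Hx0 Hx]. destruct (Rle_dec (1/2) x); [auto|].
      exfalso. apply (not_up_zero x); [lra|auto].
    + intros b Hb. destruct (Rle_dec b (1/2)); [auto|]. exfalso.
      assert (b <= (b + 1/2)/2); [|lra]. apply Hb. split; [lra|]. apply up_zero. lra.
  - split.
    + intros x [Hx0 Hx]. destruct (Rle_dec (1/2) x); [auto|].
      exfalso. apply (not_low_zero x); [lra|auto].
    + intros b Hb. destruct (Rle_dec b (1/2)); [auto|]. exfalso.
      assert (b <= (b + 1/2)/2); [|lra]. apply Hb. split; [lra|]. apply low_zero. lra.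
  - exists (1/2). split; [lra|]. split.
    + exists c1, eta0. split; [lra|]. split; [lra|]. intros eps q He Hq.
      destruct (ratio_bounds _ _ _ He Hq) as [H1 _].
      replace (1/2 - 1/2) with 0 in H1 by ring. rewrite Rpower_O in H1 by lra. lra.
    + exists C1, eta0. split; [lra|]. intros eps q He Hq.
      destruct (ratio_bounds _ _ _ He Hq) as [_ H1].
      replace (1/2 - 1/2) with 0 in H1 by ring. rewrite Rpower_O in H1 by lra. lra.
Qed.
End Mink.

Lemma up_nat (z : R) : 0 < z -> exists N : nat, z < INR N <= z + 1.
Proof.
  intros Hz. destruct (archimed z) as [H1 H2].
  assert (H0 : (0 <= up z)%Z).
  { apply le_IZR. simpl. lra. }
  exists (Z.to_nat (up z)). rewrite INR_IZR_INZ, Z2Nat.id by exact H0. lra.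
Qed.

Section Geo.
Variables (x y : nat -> R) (x0 sg A B G : R).
Hypothesis Hsg : sg = 1 \/ sg = -1.
Hypothesis Hx : forall n, x n = x0 + sg * y n.
Hypothesis HA : 0 < A.
Hypothesis HB : 0 < B.
Hypothesis HG : 0 < G.
Hypothesis Hpos : forall n, (1 <= n)%nat -> 0 < y n.
Hypothesis Hdec : forall n, (1 <= n)%nat -> y (S n) < y n.
Hypothesis Hup : forall n, (1 <= n)%nat -> y n <= B / INR n.
Hypothesis Hlow : forall n, (1 <= n)%nat -> A / INR n <= y n.
Hypothesis Hgap : forall n, (1 <= n)%nat -> y n - y (S n) <= G / (INR n * INR n).

Let Orb := orbit_set x.

Lemma dec_le N j : (1 <= N)%nat -> y (N + j) <= y N.
Proof.
  intros HN. induction j. { rewrite Nat.add_0_r. lra. }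
  rewrite Nat.add_succ_r. pose proof (Hdec (N + j) ltac:(lia)). lra.
Qed.

Lemma find_index N t : (1 <= N)%nat -> forall k, y (N + k) < t -> t <= y N ->
  exists n, (N <= n)%nat /\ y (S n) < t <= y n.
Proof.
  intros HN k. induction k as [|k IH]; intros H1 H2.
  - rewrite Nat.add_0_r in H1. lra.
  - destruct (Rlt_le_dec (y (N + k)) t) as [H|H].
    + apply IH; auto.
    + exists (N + k)%nat. split; [lia|]. rewrite <- Nat.add_succ_r. lra.
Qed.

Lemma sgabs r : Rabs (sg * r) = Rabs r.
Proof. rewrite Rabs_mult. destruct Hsg as [E|E]; rewrite E; [rewrite Rabs_R1|rewrite Rabs_left by lra]; ring. Qed.

Lemma interval_in_nbhd (eps : R) (N : nat) : (1 <= N)%nat -> 0 < eps ->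
  G < eps * (INR N * INR N) ->
  forall t, 0 < t < y N -> nbhd Orb eps (x0 + sg * t).
Proof.
  intros HN He HGN t Ht.
  destruct (up_nat (B / t)) as [M' HM']. { apply Rdiv_lt_0_compat; lra. }
  assert (HM : y (N + M') < t).
  { assert (HNM : (1 <= N + M')%nat) by lia.
    pose proof (Hup _ HNM). rewrite plus_INR in H.
    assert (0 <= INR N) by apply pos_INR.
    assert (B < t * (INR N + INR M')).
    { assert (B / t * t = B) by (field; lra). nra. }
    assert (B / (INR N + INR M') < t).
    { apply Rmult_lt_reg_r with (INR N + INR M'). { nra. }
      unfold Rdiv. rewrite Rmult_assoc, Rinv_l by nra. lra. }
    lra. }
  destruct (find_index N t HN M' HM ltac:(lra)) as [n [Hn1 [Hn2 Hn3]]].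
  exists (x n). split. { exists n. split; [lia|auto]. }
  rewrite Hx. replace (x0 + sg * t - (x0 + sg * y n)) with (sg * (t - y n)) by ring.
  rewrite sgabs. rewrite Rabs_left1 by lra.
  pose proof (Hgap n ltac:(lia)).
  assert (HNn : INR N <= INR n) by (apply le_INR; lia).
  assert (1 <= INR N) by (replace 1 with (INR 1) by reflexivity; apply le_INR; lia).
  assert (G / (INR n * INR n) <= G / (INR N * INR N)).
  { apply Rmult_le_compat_l; [lra|]. apply Rinv_le_contravar; nra. }
  assert (G / (INR N * INR N) < eps).
  { apply Rmult_lt_reg_r with (INR N * INR N). { nra. }
    unfold Rdiv. rewrite Rmult_assoc, Rinv_l by nra. lra. }
  lra.
Qed.

Lemma measure_low (eps m : R) (N : nat) : (1 <= N)%nat -> 0 < eps ->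
  G < eps * (INR N * INR N) -> lebesgue_measure (nbhd Orb eps) m -> y N <= m.
Proof.
  intros HN He HGN Hm. pose proof (Hpos N HN).
  destruct Hsg as [E|E].
  - replace (y N) with ((x0 + y N) - x0) by ring.
    apply (measure_lower (nbhd Orb eps) x0 (x0 + y N) m); [lra| |auto].
    intros z Hz. replace z with (x0 + sg * (z - x0)) by (rewrite E; ring).
    apply (interval_in_nbhd eps N); auto; lra.
  - replace (y N) with (x0 - (x0 - y N)) by ring.
    apply (measure_lower (nbhd Orb eps) (x0 - y N) x0 m); [lra| |auto].
    intros z Hz. replace z with (x0 + sg * (x0 - z)) by (rewrite E; ring).
    apply (interval_in_nbhd eps N); auto; lra.
Qed.

Lemma cover_upper (eps : R) (N : nat) : (1 <= N)%nat -> 0 < eps ->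
  exists l, cover_length (nbhd Orb eps) l /\ l <= 2 * y N + 2 * eps + 2 * eps * INR N.
Proof.
  intros HN He.
  set (a := fun k => match k with 0%nat => x0 - y N - eps
                    | _ => if Nat.ltb k N then x k - eps else 0 end).
  set (b := fun k => match k with 0%nat => x0 + y N + eps
                    | _ => if Nat.ltb k N then x k + eps else 0 end).
  set (f := fun k => b k - a k).
  pose proof (Hpos N HN) as HyN.
  assert (Hab : forall k, a k <= b k).
  { intros [|k]; unfold a, b; [lra|]. destruct (Nat.ltb (Datatypes.S k) N); lra. }
  assert (Hz : forall k, (N <= k)%nat -> f k = 0).
  { intros [|k] Hk; [lia|]. unfold f, a, b.
    replace (Nat.ltb (Datatypes.S k) N) with false; [ring|].
    symmetry. apply Nat.ltb_ge. lia. }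
  assert (Hsum : forall j, sum_f_R0 f (N + j) = sum_f_R0 f N).
  { induction j. { now rewrite Nat.add_0_r. }
    rewrite Nat.add_succ_r. simpl. rewrite IHj, Hz by lia. ring. }
  exists (sum_f_R0 f N). split.
  - exists a, b. split; [auto|]. split.
    + intros z [w [[n [Hn1 Hn2]] Hzw]]. subst w.
      destruct (Nat.ltb n N) eqn:E.
      * exists n. unfold a, b. destruct n; [lia|]. rewrite E.
        apply Rabs_def2 in Hzw. lra.
      * apply Nat.ltb_ge in E. exists 0%nat. unfold a, b.
        pose proof (dec_le N (n - N) HN). replace (N + (n - N))%nat with n in H by lia.
        rewrite Hx in Hzw. apply Rabs_def2 in Hzw.
        pose proof (Hpos n Hn1).
        destruct Hsg as [E1|E1]; rewrite E1 in Hzw; lra.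
    + intros e0 He0. exists N. intros n Hn. unfold Rdist.
      replace n with (N + (n - N))%nat by lia. rewrite Hsum.
      rewrite Rminus_diag, Rabs_R0. lra.
  - assert (Hb : forall k, sum_f_R0 f k <= 2 * y N + 2 * eps + 2 * eps * INR k).
    { induction k.
      - simpl. unfold f, a, b. lra.
      - simpl sum_f_R0. rewrite S_INR.
        assert (f (Datatypes.S k) <= 2 * eps).
        { unfold f, a, b. destruct (Nat.ltb (Datatypes.S k) N); lra. }
        lra. }
    apply Hb.
Qed.

Lemma geo_bounds : exists c1 C1 eta0, 0 < c1 /\ 0 < C1 /\ 0 < eta0 /\
  (forall eps, 0 < eps < eta0 -> exists m, lebesgue_measure (nbhd Orb eps) m) /\
  (forall eps m, 0 < eps < eta0 -> lebesgue_measure (nbhd Orb eps) m ->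
     c1 * sqrt eps <= m <= C1 * sqrt eps).
Proof.
  set (K := 1 + G).
  exists (A / (2 * K)), (2 * B + 2 + 4 * K), 1.
  assert (HK : 1 <= K /\ G < K * K) by (unfold K; split; nra).
  split; [apply Rdiv_lt_0_compat; lra|]. split; [lra|]. split; [lra|].
  assert (Key : forall eps, 0 < eps < 1 -> exists N : nat, (1 <= N)%nat /\
            G < eps * (INR N * INR N) /\ K / sqrt eps < INR N <= 2 * K / sqrt eps).
  { intros eps He. set (se := sqrt eps).
    assert (Hse : 0 < se < 1).
    { unfold se. split; [apply sqrt_lt_R0; lra|]. rewrite <- sqrt_1. apply sqrt_lt_1; lra. }
    assert (Hse2 : se * se = eps) by (unfold se; apply sqrt_sqrt; lra).
    assert (Hz : K <= K / se).
    { apply Rmult_le_reg_r with se; [lra|]. unfold Rdiv. rewrite Rmult_assoc, Rinv_l by lra. nra. }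
    assert (Hzz : K / se * se = K) by (field; lra).
    destruct (up_nat (K / se)) as [N HN]; [lra|].
    exists N. split; [|split].
    - assert (1 < INR N) by lra. destruct N; [simpl in *; lra|lia].
    - assert (K < INR N * se) by nra. rewrite <- Hse2. nra.
    - split; [lra|]. assert (K / se + 1 <= 2 * K / se); [|lra].
      unfold Rdiv. rewrite Rmult_assoc. fold (K / se). lra. }
  split.
  - intros eps He. destruct (Key eps He) as [N [HN _]].
    apply measure_exists. destruct (cover_upper eps N HN ltac:(lra)) as [l [Hl _]].
    exists l. exact Hl.
  - intros eps m He Hm. destruct (Key eps He) as [N [HN [HG' [HN1 HN2]]]].
    set (se := sqrt eps).
    assert (Hse : 0 < se < 1).
    { unfold se. split; [apply sqrt_lt_R0; lra|]. rewrite <- sqrt_1. apply sqrt_lt_1; lra. }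
    assert (Hse2 : se * se = eps) by (unfold se; apply sqrt_sqrt; lra).
    fold se in HN1, HN2.
    assert (HNse1 : K < INR N * se).
    { assert (K / se * se = K) by (field; lra). nra. }
    assert (HNse2 : INR N * se <= 2 * K).
    { assert (2 * K / se * se = 2 * K) by (field; lra). nra. }
    assert (HNp : 0 < INR N) by nra.
    split.
    + pose proof (measure_low eps m N HN ltac:(lra) HG' Hm).
      pose proof (Hlow N HN).
      assert (A / (2 * K) * se <= A / INR N); [|lra].
      assert (H3 : se / (2 * K) <= / INR N).
      { apply Rmult_le_reg_r with (2 * K * INR N); [nra|].
        replace (se / (2 * K) * (2 * K * INR N)) with (INR N * se) by (field; lra).
        replace (/ INR N * (2 * K * INR N)) with (2 * K) by (field; lra). lra. }
      replace (A / (2 * K) * se) with (A * (se / (2 * K))) by (field; lra).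
      unfold Rdiv at 2. apply Rmult_le_compat_l; lra.
    + destruct (cover_upper eps N HN ltac:(lra)) as [l [Hl Hlb]].
      pose proof (measure_upper _ _ _ Hl Hm).
      pose proof (Hup N HN).
      assert (HBN : B / INR N <= B * se).
      { apply Rmult_le_reg_r with (INR N); [lra|].
        replace (B / INR N * INR N) with B by (field; lra). nra. }
      assert (eps * INR N <= 2 * K * se) by nra.
      assert (eps <= se) by nra.
      nra.
Qed.
End Geo.

Lemma inv_step_lo (y y' c : R) : 0 < y -> 0 < y' -> y' * (1 + c * y) <= y -> / y + c <= / y'.
Proof.
  intros H1 H2 H3. apply Rmult_le_reg_r with (y * y'); [nra|].
  replace ((/ y + c) * (y * y')) with (y' * (1 + c * y)) by (field; lra).
  replace (/ y' * (y * y')) with y by (field; lra). lra.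
Qed.

Lemma inv_step_hi (y y' c : R) : 0 < y -> 0 < y' -> y <= y' * (1 + c * y) -> / y' <= / y + c.
Proof.
  intros H1 H2 H3. apply Rmult_le_reg_r with (y * y'); [nra|].
  replace ((/ y + c) * (y * y')) with (y' * (1 + c * y)) by (field; lra).
  replace (/ y' * (y * y')) with y by (field; lra). lra.
Qed.

Section Seq.
Variables (y : nat -> R) (al be r1 : R).
Hypothesis Hbe : 0 < be.
Hypothesis Hal : 0 < al.
Hypothesis Hr1 : al * r1 <= 1/2.
Hypothesis Hy1 : 0 < y 1%nat < r1.
Hypothesis Hrec : forall n, (1 <= n)%nat -> 0 < y n < r1 ->
  be * (y n * y n) <= y n - y (S n) <= al * (y n * y n).

Lemma seq_inv : forall n, (1 <= n)%nat -> 0 < y n < r1.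
Proof.
  intros n Hn. induction n as [|n IH]; [lia|].
  destruct n as [|n]; [exact Hy1|].
  specialize (IH ltac:(lia)). specialize (Hrec (S n) ltac:(lia) IH). nra.
Qed.

Lemma seq_dec : forall n, (1 <= n)%nat -> y (S n) < y n.
Proof.
  intros n Hn. pose proof (seq_inv n Hn). specialize (Hrec n Hn H).
  assert (0 < be * (y n * y n)) by (apply Rmult_lt_0_compat; nra). lra.
Qed.

Lemma seq_recinv : forall k, / y 1%nat + be * INR k <= / y (S k) <= / y 1%nat + 2 * al * INR k.
Proof.
  induction k as [|k IH].
  - simpl. lra.
  - pose proof (seq_inv (S k) ltac:(lia)) as H1.
    pose proof (seq_inv (S (S k)) ltac:(lia)) as H2.
    specialize (Hrec (S k) ltac:(lia) H1).
    set (Y := y (S k)) in *. set (Y' := y (S (S k))) in *.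
    assert (/ Y + be <= / Y').
    { apply inv_step_lo; try lra.
      assert (Y' * (1 + be*Y) <= (Y - be*(Y*Y))*(1+be*Y)) by (apply Rmult_le_compat_r; nra).
      assert (0 <= be * be * (Y * Y * Y)).
      { apply Rmult_le_pos; [nra|]. apply Rmult_le_pos; nra. }
      nra. }
    assert (/ Y' <= / Y + 2 * al).
    { apply inv_step_hi; try lra.
      assert ((Y - al*(Y*Y))*(1+2*al*Y) <= Y' * (1 + 2*al*Y)) by (apply Rmult_le_compat_r; nra).
      assert (0 <= al * (Y * Y) * (1 - 2 * al * Y)).
      { apply Rmult_le_pos; [|nra]. apply Rmult_le_pos; nra. }
      nra. }
    rewrite S_INR. lra.
Qed.

Lemma seq_bounds : exists A B G, 0 < A /\ 0 < B /\ 0 < G /\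
  (forall n, (1 <= n)%nat -> y n <= B / INR n) /\
  (forall n, (1 <= n)%nat -> A / INR n <= y n) /\
  (forall n, (1 <= n)%nat -> y n - y (S n) <= G / (INR n * INR n)).
Proof.
  set (b' := Rmin be (/ y 1%nat)). set (a' := Rmax (/ y 1%nat) (2 * al)).
  assert (Hy1i : 0 < / y 1%nat) by (apply Rinv_0_lt_compat; lra).
  assert (Hb' : 0 < b') by (unfold b'; apply Rmin_glb_lt; lra).
  assert (Hb1 : b' <= be) by apply Rmin_l. assert (Hb2 : b' <= / y 1%nat) by apply Rmin_r.
  assert (Ha1 : 2 * al <= a') by apply Rmax_r. assert (Ha2 : / y 1%nat <= a') by apply Rmax_l.
  assert (Hlo : forall n, (1 <= n)%nat -> b' * INR n <= / y n).
  { intros n Hn. destruct n; [lia|]. destruct (seq_recinv n) as [H _].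
    rewrite S_INR. pose proof (pos_INR n). nra. }
  assert (Hhi : forall n, (1 <= n)%nat -> / y n <= a' * INR n).
  { intros n Hn. destruct n; [lia|]. destruct (seq_recinv n) as [_ H].
    rewrite S_INR. pose proof (pos_INR n). nra. }
  assert (HB : forall n, (1 <= n)%nat -> y n <= / b' / INR n).
  { intros n Hn. pose proof (seq_inv n Hn).
    assert (1 <= INR n) by (replace 1 with (INR 1) by reflexivity; apply le_INR; lia).
    rewrite <- (Rinv_inv (y n)). unfold Rdiv. rewrite <- Rinv_mult.
    apply Rinv_le_contravar; [nra|]. apply Hlo; auto. }
  exists (/ a'), (/ b'), (al * (/ b' * / b')).
  assert (0 < / b') by (apply Rinv_0_lt_compat; lra).
  split; [apply Rinv_0_lt_compat; lra|]. split; [auto|]. split; [apply Rmult_lt_0_compat; [lra|apply Rmult_lt_0_compat; lra]|].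
  split; [exact HB|]. split.
  - intros n Hn. pose proof (seq_inv n Hn).
    assert (1 <= INR n) by (replace 1 with (INR 1) by reflexivity; apply le_INR; lia).
    rewrite <- (Rinv_inv (y n)). unfold Rdiv. rewrite <- Rinv_mult.
    apply Rinv_le_contravar; [apply Rinv_0_lt_compat; lra|]. apply Hhi; auto.
  - intros n Hn. pose proof (seq_inv n Hn) as Hyn. specialize (Hrec n Hn Hyn).
    specialize (HB n Hn).
    assert (1 <= INR n) by (replace 1 with (INR 1) by reflexivity; apply le_INR; lia).
    assert (y n * y n <= (/ b' / INR n) * (/ b' / INR n)) by nra.
    replace (al * (/ b' * / b') / (INR n * INR n)) with (al * ((/ b' / INR n) * (/ b' / INR n)))
      by (field; lra).
    nra.
Qed.
End Seq.

Lemma mvt_gen (f f' : R -> R) (u v : R) :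
  (forall c, Rmin u v <= c <= Rmax u v -> derivable_pt_lim f c (f' c)) ->
  exists c, f v - f u = f' c * (v - u) /\ Rmin u v <= c <= Rmax u v.
Proof.
  intros H. destruct (Rtotal_order u v) as [Huv|[Huv|Huv]].
  - destruct (MVT_cor2 f f' u v Huv) as [c [Hc1 Hc2]].
    { intros c Hc. apply H. rewrite Rmin_left, Rmax_right by lra. lra. }
    exists c. split; [auto|]. rewrite Rmin_left, Rmax_right by lra. lra.
  - subst v. exists u. split; [ring|]. rewrite Rmin_left, Rmax_left by lra. lra.
  - destruct (MVT_cor2 f f' v u Huv) as [c [Hc1 Hc2]].
    { intros c Hc. apply H. rewrite Rmin_right, Rmax_left by lra. lra. }
    exists c. split; [lra|]. rewrite Rmin_right, Rmax_left by lra. lra.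
Qed.

Lemma between_facts (u v c : R) : Rmin u v <= c <= Rmax u v ->
  0 <= (c - u) * (v - u) /\ Rabs (c - u) <= Rabs (v - u).
Proof.
  intros H. destruct (Rle_dec u v).
  - rewrite Rmin_left, Rmax_right in H by lra.
    rewrite !Rabs_right by lra. split; nra.
  - rewrite Rmin_right, Rmax_left in H by lra.
    rewrite !Rabs_left1 by lra. split; nra.
Qed.

Lemma dpl_val f x l l' : derivable_pt_lim f x l -> l = l' -> derivable_pt_lim f x l'.
Proof. intros H E. subst. exact H. Qed.

Section Taylor.
Variables (F F1 F2 : R -> R) (x0 d : R).
Hypothesis Hd : 0 < d.
Hypothesis HF1 : forall y, Rabs (y - x0) < d -> derivable_pt_lim F y (F1 y).
Hypothesis HF2 : forall y, Rabs (y - x0) < d -> derivable_pt_lim F1 y (F2 y).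
Hypothesis Hfix : F x0 = x0.
Hypothesis Hd1 : F1 x0 = 1.

Lemma dH (m c : R) : Rabs (c - x0) < d ->
  derivable_pt_lim (fun z => F z - z - m / 2 * ((z - x0) * (z - x0))) c
    (F1 c - 1 - m * (c - x0)).
Proof.
  intros Hc.
  pose proof (derivable_pt_lim_minus F id c (F1 c) 1 (HF1 c Hc) (derivable_pt_lim_id c)) as H1.
  pose proof (derivable_pt_lim_minus id (fct_cte x0) c 1 0 (derivable_pt_lim_id c)
     (derivable_pt_lim_const x0 c)) as H2.
  pose proof (derivable_pt_lim_mult _ _ c _ _ H2 H2) as H3.
  pose proof (derivable_pt_lim_scal _ (m / 2) c _ H3) as H4.
  pose proof (derivable_pt_lim_minus _ _ c _ _ H1 H4) as H5.
  eapply dpl_val; [exact H5|].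
  unfold id, fct_cte, minus_fct. field.
Qed.

Lemma step1 (m : R) : (forall y, Rabs (y - x0) < d -> m <= F2 y) ->
  forall t, Rabs (t - x0) < d -> exists k, 0 <= k /\ F1 t - 1 - m * (t - x0) = k * (t - x0).
Proof.
  intros Hm t Ht.
  destruct (mvt_gen F1 F2 x0 t) as [c [Hc1 Hc2]].
  { intros c Hc. apply HF2. destruct (between_facts _ _ _ Hc). lra. }
  destruct (between_facts _ _ _ Hc2) as [_ Hcc].
  exists (F2 c - m). split; [specialize (Hm c ltac:(lra)); lra|].
  rewrite Hd1 in Hc1. lra.
Qed.

Lemma step1' (M : R) : (forall y, Rabs (y - x0) < d -> F2 y <= M) ->
  forall t, Rabs (t - x0) < d -> exists k, k <= 0 /\ F1 t - 1 - M * (t - x0) = k * (t - x0).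
Proof.
  intros Hm t Ht.
  destruct (mvt_gen F1 F2 x0 t) as [c [Hc1 Hc2]].
  { intros c Hc. apply HF2. destruct (between_facts _ _ _ Hc). lra. }
  destruct (between_facts _ _ _ Hc2) as [_ Hcc].
  exists (F2 c - M). split; [specialize (Hm c ltac:(lra)); lra|].
  rewrite Hd1 in Hc1. lra.
Qed.

Lemma taylor_lo (m : R) : (forall y, Rabs (y - x0) < d -> m <= F2 y) ->
  forall x, Rabs (x - x0) < d -> m / 2 * ((x - x0) * (x - x0)) <= F x - x.
Proof.
  intros Hm x Hx.
  destruct (mvt_gen (fun z => F z - z - m / 2 * ((z - x0) * (z - x0)))
                    (fun z => F1 z - 1 - m * (z - x0)) x0 x) as [c [Hc1 Hc2]].
  { intros c Hc. apply dH. destruct (between_facts _ _ _ Hc). lra. }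
  destruct (between_facts _ _ _ Hc2) as [Hp Hcc].
  destruct (step1 m Hm c ltac:(lra)) as [k [Hk Hk2]].
  rewrite Hk2 in Hc1. rewrite Hfix in Hc1.
  assert (0 <= k * ((c - x0) * (x - x0))) by (apply Rmult_le_pos; lra).
  nra.
Qed.

Lemma taylor_hi (M : R) : (forall y, Rabs (y - x0) < d -> F2 y <= M) ->
  forall x, Rabs (x - x0) < d -> F x - x <= M / 2 * ((x - x0) * (x - x0)).
Proof.
  intros Hm x Hx.
  destruct (mvt_gen (fun z => F z - z - M / 2 * ((z - x0) * (z - x0)))
                    (fun z => F1 z - 1 - M * (z - x0)) x0 x) as [c [Hc1 Hc2]].
  { intros c Hc. apply dH. destruct (between_facts _ _ _ Hc). lra. }
  destruct (between_facts _ _ _ Hc2) as [Hp Hcc].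
  destruct (step1' M Hm c ltac:(lra)) as [k [Hk Hk2]].
  rewrite Hk2 in Hc1. rewrite Hfix in Hc1.
  assert (0 <= (- k) * ((c - x0) * (x - x0))) by (apply Rmult_le_pos; lra).
  nra.
Qed.
End Taylor.

Lemma cont_nbhd (f : R -> R) (x0 l e : R) : derivable_pt_lim f x0 l -> 0 < e ->
  exists d, 0 < d /\ forall y, Rabs (y - x0) < d -> Rabs (f y - f x0) < e.
Proof.
  intros H He.
  assert (Hc : continuity_pt f x0).
  { apply derivable_continuous_pt. exists l. exact H. }
  destruct (Hc e He) as [d [Hd Hd2]]. exists d. split; [lra|].
  intros y Hy. destruct (Req_dec y x0) as [E|E].
  - subst. rewrite Rminus_diag, Rabs_R0. lra.
  - apply (Hd2 y). split; [split; [exact I|auto]|exact Hy].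
Qed.

Lemma main_case (x0 r d al be sg : R) (F : R -> R) :
  0 < be -> be <= al -> 0 < d -> d <= r -> (sg = 1 \/ sg = -1) ->
  (forall z, Rabs (z - x0) < d ->
     be * ((z - x0) * (z - x0)) <= sg * (z - F z) <= al * ((z - x0) * (z - x0))) ->
  exists r1, 0 < r1 /\ forall x : nat -> R, 0 < sg * (x 1%nat - x0) < r1 ->
    (forall n, (1 <= n)%nat -> x (S n) = F (x n)) ->
    (forall n, (1 <= n)%nat -> x0 - r < x n < x0 + r) /\ orbit_conclusions x0 x.
Proof.
  intros Hbe Hba Hd Hdr Hsg HT.
  assert (Hsg2 : sg * sg = 1) by (destruct Hsg as [E|E]; rewrite E; ring).
  assert (Hal : 0 < al) by lra.
  set (r1 := Rmin d (/ (2 * al))).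
  assert (Hr1a : r1 <= d) by apply Rmin_l.
  assert (Hr1b : r1 <= / (2 * al)) by apply Rmin_r.
  assert (Hr1 : 0 < r1) by (apply Rmin_glb_lt; [lra|apply Rinv_0_lt_compat; lra]).
  assert (Har1 : al * r1 <= 1/2).
  { apply Rle_trans with (al * / (2 * al)); [apply Rmult_le_compat_l; lra|].
    right. field. lra. }
  exists r1. split; [exact Hr1|]. intros x Hx1 Hrec.
  set (y := fun n => sg * (x n - x0)).
  assert (Hx : forall n, x n = x0 + sg * y n).
  { intro n. unfold y. replace (sg * (sg * (x n - x0))) with ((sg * sg) * (x n - x0)) by ring.
    rewrite Hsg2. ring. }
  assert (Habs : forall n, Rabs (x n - x0) = Rabs (y n)).
  { intro n. unfold y. rewrite Rabs_mult. destruct Hsg as [E|E]; rewrite E;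
    [rewrite Rabs_R1|rewrite (Rabs_left (-1)) by lra]; ring. }
  assert (Hy1 : 0 < y 1%nat < r1) by exact Hx1.
  assert (Hyrec : forall n, (1 <= n)%nat -> 0 < y n < r1 ->
     be * (y n * y n) <= y n - y (S n) <= al * (y n * y n)).
  { intros n Hn Hyn.
    assert (Hxn : Rabs (x n - x0) < d) by (rewrite Habs, Rabs_right; lra).
    specialize (HT (x n) Hxn).
    assert (E1 : y n - y (S n) = sg * (x n - F (x n))).
    { unfold y. rewrite (Hrec n Hn). ring. }
    assert (E2 : (x n - x0) * (x n - x0) = y n * y n).
    { rewrite (Hx n). replace (x0 + sg * y n - x0) with (sg * y n) by ring.
      replace (sg * y n * (sg * y n)) with ((sg * sg) * (y n * y n)) by ring.
      rewrite Hsg2. ring. }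
    rewrite E1, <- E2. exact HT. }
  pose proof (seq_inv y al be r1 Hbe Har1 Hy1 Hyrec) as Hinv.
  pose proof (seq_dec y al be r1 Hbe Har1 Hy1 Hyrec) as Hdec.
  destruct (seq_bounds y al be r1 Hbe Hal Har1 Hy1 Hyrec)
    as [A [B [G [HA [HB [HG [Hup [Hlow Hgap]]]]]]]].
  assert (Hpos : forall n, (1 <= n)%nat -> 0 < y n) by (intros n Hn; apply Hinv; auto).
  split.
  - intros n Hn. specialize (Hinv n Hn). pose proof (Habs n).
    rewrite (Rabs_right (y n)) in H by lra. assert (Hr : Rabs (x n - x0) < r) by lra. apply Rabs_def2 in Hr. lra.
  - split; [|].
    + exists A, B. split; [lra|]. split.
      * assert (1 <= INR 1) by (simpl; lra).
        specialize (Hup 1%nat (le_n 1)). specialize (Hlow 1%nat (le_n 1)).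
        simpl in Hup, Hlow. lra.
      * intros n Hn. rewrite Habs, Rabs_right by (specialize (Hpos n Hn); lra).
        specialize (Hup n Hn). specialize (Hlow n Hn).
        assert (HnR : 0 < INR n) by (apply lt_0_INR; lia).
        replace (y n / / INR n) with (y n * INR n) by (field; lra).
        split.
        -- apply Rmult_le_reg_r with (/ INR n); [apply Rinv_0_lt_compat; lra|].
           replace (y n * INR n * / INR n) with (y n) by (field; lra). exact Hlow.
        -- apply Rmult_le_reg_r with (/ INR n); [apply Rinv_0_lt_compat; lra|].
           replace (y n * INR n * / INR n) with (y n) by (field; lra). exact Hup.
    + destruct (geo_bounds x y x0 sg A B G Hsg Hx HA HB HG Hpos Hdec Hup Hlow Hgap)
        as [c1 [C1 [eta0 [Hc1 [HC1 [He0 [Hex Hbd]]]]]]].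
      exact (mink_abstract (orbit_set x) c1 C1 eta0 Hc1 HC1 He0 Hex Hbd).
Qed.

Theorem theorem3 (x0 r : R) (F F1 F2 F3 : R -> R)
  (hr : 0 < r)
  (hF1 : forall y, x0 - r < y < x0 + r -> derivable_pt_lim F y (F1 y))
  (hF2 : forall y, x0 - r < y < x0 + r -> derivable_pt_lim F1 y (F2 y))
  (hF3 : forall y, x0 - r < y < x0 + r -> derivable_pt_lim F2 y (F3 y))
  (hF3c : forall y, x0 - r < y < x0 + r -> continuity_pt F3 y)
  (hfix : F x0 = x0) (hd1 : F1 x0 = 1) :
  (F2 x0 < 0 ->
    exists r1, 0 < r1 /\
      forall x : nat -> R, x0 < x 1%nat < x0 + r1 ->
        (forall n, (1 <= n)%nat -> x (S n) = F (x n)) ->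
        (forall n, (1 <= n)%nat -> x0 - r < x n < x0 + r) /\
        orbit_conclusions x0 x) /\
  (0 < F2 x0 ->
    exists r1, 0 < r1 /\
      forall x : nat -> R, x0 - r1 < x 1%nat < x0 ->
        (forall n, (1 <= n)%nat -> x (S n) = F (x n)) ->
        (forall n, (1 <= n)%nat -> x0 - r < x n < x0 + r) /\
        orbit_conclusions x0 x).
Proof.
  assert (Hin : forall z d, d <= r -> Rabs (z - x0) < d -> x0 - r < z < x0 + r).
  { intros z d Hd Hz. apply Rabs_def2 in Hz. lra. }
  assert (Hc : forall mu, 0 < mu -> exists d, 0 < d /\ d <= r /\
            forall z, Rabs (z - x0) < d -> F2 x0 - mu / 2 <= F2 z <= F2 x0 + mu / 2).
  { intros mu Hmu.
    destruct (cont_nbhd F2 x0 (F3 x0) (mu / 2) (hF3 x0 ltac:(lra)) ltac:(lra)) as [d0 [Hd0 Hd0']].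
    exists (Rmin d0 r). split; [apply Rmin_glb_lt; lra|]. split; [apply Rmin_r|].
    intros z Hz. assert (Rabs (z - x0) < d0) by (pose proof (Rmin_l d0 r); lra).
    specialize (Hd0' z H). apply Rabs_def2 in Hd0'. lra. }
  split.
  - intros Hneg. set (mu := - F2 x0).
    destruct (Hc mu ltac:(unfold mu; lra)) as [d [Hd [Hdr Hdz]]].
    assert (HF1' : forall z, Rabs (z - x0) < d -> derivable_pt_lim F z (F1 z))
      by (intros z Hz; apply hF1; eapply Hin; eauto).
    assert (HF2' : forall z, Rabs (z - x0) < d -> derivable_pt_lim F1 z (F2 z))
      by (intros z Hz; apply hF2; eapply Hin; eauto).
    destruct (main_case x0 r d (3 * mu / 4) (mu / 4) 1 F) as [r1 [Hr1 Hmain]];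
      [unfold mu; lra|unfold mu; lra|lra|lra|now left| |].
    { intros z Hz.
      pose proof (taylor_lo F F1 F2 x0 d HF1' HF2' hfix hd1 (F2 x0 - mu / 2)
                    (fun w Hw => proj1 (Hdz w Hw)) z Hz).
      pose proof (taylor_hi F F1 F2 x0 d HF1' HF2' hfix hd1 (F2 x0 + mu / 2)
                    (fun w Hw => proj2 (Hdz w Hw)) z Hz).
      unfold mu in *. split; nra. }
    exists r1. split; [auto|]. intros x Hx1 Hrec. apply Hmain; [lra|auto].
  - intros Hpos. set (mu := F2 x0).
    destruct (Hc mu ltac:(unfold mu; lra)) as [d [Hd [Hdr Hdz]]].
    assert (HF1' : forall z, Rabs (z - x0) < d -> derivable_pt_lim F z (F1 z))
      by (intros z Hz; apply hF1; eapply Hin; eauto).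
    assert (HF2' : forall z, Rabs (z - x0) < d -> derivable_pt_lim F1 z (F2 z))
      by (intros z Hz; apply hF2; eapply Hin; eauto).
    destruct (main_case x0 r d (3 * mu / 4) (mu / 4) (-1) F) as [r1 [Hr1 Hmain]];
      [unfold mu; lra|unfold mu; lra|lra|lra|now right| |].
    { intros z Hz.
      pose proof (taylor_lo F F1 F2 x0 d HF1' HF2' hfix hd1 (F2 x0 - mu / 2)
                    (fun w Hw => proj1 (Hdz w Hw)) z Hz).
      pose proof (taylor_hi F F1 F2 x0 d HF1' HF2' hfix hd1 (F2 x0 + mu / 2)
                    (fun w Hw => proj2 (Hdz w Hw)) z Hz).
      unfold mu in *. split; nra. }
    exists r1. split; [auto|]. intros x Hx1 Hrec. apply Hmain; [lra|auto].
Qed.
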